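(* Let $\mathcal{P}=(\{\mathcal{E}_k:k\in K\},\{M_0,M_1\})$ be a concurrent quantum program on a Hilbert space $\mathcal{H}$ of finite dimension $d$, and let $\rho_0$ be an initial density operator. Then the reachable space satisfies $$\mathcal{H}_R=\operatorname{supp}\Big(\sum_{i=0}^{d-1}\mathcal{F}^i(\rho_0)\Big),\qquad\text{where }\mathcal{F}=\sum_{k\in K}\mathcal{F}_k .$$
   Context: $\mathcal{H}$ is a complex Hilbert space of finite dimension $d\ge 1$. A super-operator on $\mathcal{H}$ is a completely positive linear map $\mathcal{E}$ on the space of linear operators on $\mathcal{H}$ with $\operatorname{tr}\mathcal{E}(\rho)\le\operatorname{tr}\rho$ for all positive $\rho$; it is trace-preserving if equality always holds. For a positive semidefinite operator $\rho$, $\operatorname{supp}(\rho)$ is the subspace spanned by the eigenvectors of $\rho$ with nonzero eigenvalues. A concurrent quantum program is a pair $\mathcal{P}=(\{\mathcal{E}_k:k\in K\},\{M_0,M_1\})$ where $K=\{1,\dots,m\}$, each $\mathcal{E}_k$ is a trace-preserving super-operator on $\mathcal{H}$, and $M_0,M_1$ are operators on $\mathcal{H}$ with $M_0^\dagger M_0+M_1^\dagger M_1=I$ (the termination measurement). For $k\in K$ define the super-operator $\mathcal{F}_k(\rho)=\mathcal{E}_k(M_1\rho M_1^\dagger)$. $S_{fin}=K^*$ is the set of finite strings over $K$; for $f=s_1s_2\cdots s_n\in S_{fin}$ put $\mathcal{F}_f=\mathcal{F}_{s_n}\circ\cdots\circ\mathcal{F}_{s_1}$ (the identity map for the empty string).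 $\mathcal{F}^i$ denotes the $i$-fold composition of $\mathcal{F}$ ($\mathcal{F}^0$ the identity). The reachable space of $\mathcal{P}$ from $\rho_0$ is $\mathcal{H}_R=\bigvee_{f\in S_{fin}}\operatorname{supp}\mathcal{F}_f(\rho_0)$, where $\bigvee$ denotes the span of the union of the subspaces. *)

(* Defs.v *)
From HB Require Import structures.
From mathcomp Require Import all_boot all_order all_algebra.
Set Implicit Arguments. Unset Strict Implicit. Unset Printing Implicit Defensive.
Import Order.TTheory GRing.Theory Num.Theory.
Local Open Scope ring_scope.

Section QDefs.
Variable C : numClosedFieldType.
Variable d : nat.

Definition adj (p q : nat) (A : 'M[C]_(p, q)) : 'M[C]_(q, p) :=
  (map_mx (@Num.conj C) A)^T.

Definition psd (A : 'M[C]_d) : Prop :=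
  A = adj A /\ forall v : 'cV[C]_d, 0 <= (adj v *m A *m v) 0 0.

(* positive semidefiniteness of the block operator on C^n (x) C^d whose
   (i,j) block is X i j, written out entrywise *)
Definition psd_block (n : nat) (X : 'I_n -> 'I_n -> 'M[C]_d) : Prop :=
  (forall i j, X j i = adj (X i j)) /\
  forall v : 'I_n -> 'cV[C]_d,
    0 <= \sum_(i < n) \sum_(j < n) (adj (v i) *m X i j *m v j) 0 0.

(* complete positivity: id_n (x) E preserves positivity for all n *)
Definition completely_positive (E : 'M[C]_d -> 'M[C]_d) : Prop :=
  forall (n : nat) (X : 'I_n -> 'I_n -> 'M[C]_d),
    psd_block X -> psd_block (fun i j => E (X i j)).

Definition super_operator (E : {linear 'M[C]_d -> 'M[C]_d}) : Prop :=
  completely_positive E /\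
  forall rho : 'M[C]_d, psd rho -> \tr (E rho) <= \tr rho.

Definition trace_preserving (E : {linear 'M[C]_d -> 'M[C]_d}) : Prop :=
  forall rho : 'M[C]_d, psd rho -> \tr (E rho) = \tr rho.

Definition density_operator (rho : 'M[C]_d) : Prop :=
  psd rho /\ \tr rho = 1.

(* subspaces are represented as predicates on vectors; span of a set *)
Definition span (P : 'cV[C]_d -> Prop) (v : 'cV[C]_d) : Prop :=
  exists (n : nat) (w : 'I_n -> 'cV[C]_d) (c : 'I_n -> C),
    (forall i, P (w i)) /\ v = \sum_(i < n) c i *: w i.

Definition supp (rho : 'M[C]_d) : 'cV[C]_d -> Prop :=
  span (fun w => exists a : C, a != 0 /\ rho *m w = a *: w).

Definition Fk (m : nat) (E : 'I_m -> {linear 'M[C]_d -> 'M[C]_d})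
  (M1 : 'M[C]_d) (k : 'I_m) (rho : 'M[C]_d) : 'M[C]_d :=
  E k (M1 *m rho *m adj M1).

Definition Fstr (m : nat) (E : 'I_m -> {linear 'M[C]_d -> 'M[C]_d})
  (M1 : 'M[C]_d) (f : seq 'I_m) (rho : 'M[C]_d) : 'M[C]_d :=
  foldl (fun r k => Fk E M1 k r) rho f.

Definition Fsum (m : nat) (E : 'I_m -> {linear 'M[C]_d -> 'M[C]_d})
  (M1 : 'M[C]_d) (rho : 'M[C]_d) : 'M[C]_d :=
  \sum_(k < m) Fk E M1 k rho.

Definition reachable (m : nat) (E : 'I_m -> {linear 'M[C]_d -> 'M[C]_d})
  (M1 rho0 : 'M[C]_d) : 'cV[C]_d -> Prop :=
  span (fun w => exists f : seq 'I_m, supp (Fstr E M1 f rho0) w).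

End QDefs.

(* Main.v *)
Require Import Defs.
From HB Require Import structures.
From mathcomp Require Import all_boot all_order all_algebra.
From mathcomp Require Import ring.
Import Defs.
Import Order.TTheory GRing.Theory Num.Theory.
Local Open Scope ring_scope.
Set Implicit Arguments. Unset Strict Implicit. Unset Printing Implicit Defensive.

Section Q.
Variable C : numClosedFieldType.

Lemma adj_mul p q r (A : 'M[C]_(p,q)) (B : 'M[C]_(q,r)) : adj (A *m B) = adj B *m adj A.
Proof. by rewrite /adj map_mxM trmx_mul. Qed.
Lemma adjK p q (A : 'M[C]_(p,q)) : adj (adj A) = A.
Proof. by apply/matrixP=> i j; rewrite !mxE conjCK. Qed.
Lemma adjD p q (A B : 'M[C]_(p,q)) : adj (A + B) = adj A + adj B.
Proof. by apply/matrixP=> i j; rewrite !mxE rmorphD. Qed.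
Lemma adjN p q (A : 'M[C]_(p,q)) : adj (- A) = - adj A.
Proof. by apply/matrixP=> i j; rewrite !mxE rmorphN. Qed.
Lemma adjB p q (A B : 'M[C]_(p,q)) : adj (A - B) = adj A - adj B.
Proof. by rewrite adjD adjN. Qed.
Lemma adjZ p q a (A : 'M[C]_(p,q)) : adj (a *: A) = a^* *: adj A.
Proof. by apply/matrixP=> i j; rewrite !mxE rmorphM. Qed.
Lemma adj0 p q : adj (0 : 'M[C]_(p,q)) = 0.
Proof. by apply/matrixP=> i j; rewrite !mxE rmorph0. Qed.
Lemma adj_sum p q I (r : seq I) (P : pred I) (F : I -> 'M[C]_(p,q)) :
  adj (\sum_(i <- r | P i) F i) = \sum_(i <- r | P i) adj (F i).
Proof. by elim/big_rec2: _ => [|i x y _ <-]; rewrite ?adj0 ?adjD. Qed.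
Lemma adj1 n : adj (1%:M : 'M[C]_n) = 1%:M.
Proof. by apply/matrixP=> i j; rewrite !mxE rmorph_nat eq_sym. Qed.
Lemma adj_scalar n a : adj (a%:M : 'M[C]_n) = a^*%:M.
Proof. by apply/matrixP=> i j; rewrite !mxE rmorphMn eq_sym. Qed.


Local Open Scope sesquilinear_scope.

Lemma outer_sum n (M N : 'M[C]_n) (l : 'rV[C]_n) :
  M *m diag_mx l *m N = \sum_j l 0 j *: (col j M *m row j N).
Proof.
apply/matrixP=> a b; rewrite mul_mx_diag !mxE summxE.
apply: eq_bigr => j _; rewrite !mxE big_ord1 !mxE; ring.
Qed.

Lemma col_adj p q (A : 'M[C]_(p,q)) j : adj (col j (adj A)) = row j A.
Proof. by apply/matrixP=> a b; rewrite !mxE conjCK. Qed.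

Lemma adj_tC p q (A : 'M[C]_(p,q)) : A ^t* = adj A.
Proof. by apply/matrixP=> a b; rewrite !mxE. Qed.


Lemma rowcol1 n (P : 'M[C]_n) i j :
  row i P *m col j (adj P) = ((P *m adj P) i j)%:M.
Proof.
apply/matrixP=> a b; rewrite !ord1 !mxE /=.
by apply: eq_bigr => k _; rewrite !mxE.
Qed.

Lemma psd_decomp d (A : 'M[C]_d) : psd A -> exists (u : 'I_d -> 'cV[C]_d) (l : 'I_d -> C),
  [/\ forall j, 0 <= l j, forall i j, adj (u i) *m u j = (i == j)%:R%:M,
      \sum_j u j *m adj (u j) = 1%:M & A = \sum_j l j *: (u j *m adj (u j))].
Proof.
move=> [Ah Apos].
have herm : A \is hermsymmx.
  by apply/is_hermitianmxP; rewrite expr0 scale1r adj_tC -Ah.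
have /orthomx_spectralP Aeq := hermitian_normalmx herm.
set P := spectralmx A in Aeq; set sp := spectral_diag A in Aeq.
have Pu : P \is unitarymx by apply: spectral_unitarymx.
have PP : P *m adj P = 1%:M by rewrite -adj_tC; apply/unitarymxP.
have PiP : invmx P = adj P by rewrite -adj_tC invmx_unitary.
have PP' : adj P *m P = 1%:M by rewrite -PiP mulVmx // unitarymx_unit.
exists (fun j => col j (adj P)), (fun j => sp 0 j).
have orth : forall i j, adj (col i (adj P)) *m col j (adj P) = (i == j)%:R%:M.
  by move=> i j; rewrite col_adj rowcol1 PP mxE.
have Aeq2 : A = \sum_j sp 0 j *: (col j (adj P) *m adj (col j (adj P))).
  by rewrite Aeq PiP outer_sum; apply: eq_bigr => j _; rewrite col_adj.
split => //.
- move=> j; have := Apos (col j (adj P)).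
  rewrite Aeq2 mulmx_sumr mulmx_suml (bigD1 j) //= big1 ?addr0.
    by rewrite -!scalemxAr -!scalemxAl !mulmxA orth -mulmxA orth eqxx mul1mx !mxE eqxx mulr1.
  move=> k /negbTE kj; rewrite -!scalemxAr -!scalemxAl !mulmxA orth -mulmxA orth eq_sym kj.
  by rewrite -scalar_mxM mulr0 (raddf0 (@scalar_mx _ 1)) scaler0.
- have := outer_sum (adj P) P (const_mx 1); rewrite diag_const_mx mulmx1 PP'.
  by move=> ->; apply: eq_bigr => j _; rewrite mxE scale1r col_adj.
Qed.

End Q.
Section R.
Variable C : numClosedFieldType.
Variable d : nat.
Implicit Types (A B X Y : 'M[C]_d) (x y z v w : 'cV[C]_d).
Local Notation dot u x := ((adj u *m x) 0 0).

Lemma dotC x y : dot x y = (dot y x)^*.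
Proof. have -> : adj x *m y = adj (adj y *m x) by rewrite adj_mul adjK.
by rewrite !mxE. Qed.

Lemma outer_apply (u x : 'cV[C]_d) : u *m adj u *m x = (dot u x) *: u.
Proof. by rewrite -mulmxA {1}[adj u *m x]mx11_scalar mul_mx_scalar. Qed.

Definition ONB (u : 'I_d -> 'cV[C]_d) :=
  (forall i j, adj (u i) *m u j = (i == j)%:R%:M) /\ \sum_j u j *m adj (u j) = 1%:M.

Lemma dec_apply (u : 'I_d -> 'cV[C]_d) l x :
  (\sum_j l j *: (u j *m adj (u j))) *m x = \sum_j (l j * dot (u j) x) *: u j.
Proof.
rewrite mulmx_suml; apply: eq_bigr => j _.
by rewrite -scalemxAl outer_apply scalerA.
Qed.

Lemma dec_eig (u : 'I_d -> 'cV[C]_d) l k : ONB u ->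
  (\sum_j l j *: (u j *m adj (u j))) *m u k = l k *: u k.
Proof.
move=> [on _]; rewrite dec_apply (bigD1 k) //= big1 ?addr0.
  by rewrite on eqxx mxE eqxx mulr1.
by move=> j /negbTE jk; rewrite on jk mxE mulr0 scale0r.
Qed.

Lemma dec_quad (u : 'I_d -> 'cV[C]_d) l x :
  (adj x *m (\sum_j l j *: (u j *m adj (u j))) *m x) 0 0 =
  \sum_j l j * (dot (u j) x * (dot (u j) x)^*).
Proof.
rewrite -mulmxA dec_apply mulmx_sumr summxE; apply: eq_bigr => j _.
by rewrite -scalemxAr mxE (dotC x (u j)) mulrA.
Qed.

Lemma ONB_exp (u : 'I_d -> 'cV[C]_d) x : ONB u -> x = \sum_j dot (u j) x *: u j.
Proof.
move=> [_ c]; rewrite -{1}(mul1mx x) -c mulmx_suml; apply: eq_bigr => j _.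
by rewrite outer_apply.
Qed.


Lemma psd_dec A : psd A -> exists (u : 'I_d -> 'cV[C]_d) (l : 'I_d -> C),
  [/\ forall j, 0 <= l j, ONB u & A = \sum_j l j *: (u j *m adj (u j))].
Proof.
by move=> /psd_decomp [u [l [l0 on c ->]]]; exists u, l; split.
Qed.

Lemma psd_ker A x : psd A -> (adj x *m A *m x) 0 0 = 0 -> A *m x = 0.
Proof.
move=> /psd_dec [u [l [l0 on ->]]]; rewrite dec_quad => /psumr_eq0P H.
rewrite dec_apply big1 // => j _.
have /eqP := H (fun i _ => mulr_ge0 (l0 i) (mul_conjC_ge0 _)) j isT.
by rewrite mulf_eq0 mul_conjC_eq0 => /orP[] /eqP ->; rewrite ?mulr0 ?mul0r scale0r.
Qed.

Lemma range_of_ker A B : psd B -> (forall x, B *m x = 0 -> adj x *m A = 0) ->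
  exists D, A = B *m D.
Proof.
move=> /psd_dec [u [l [l0 on Be]]] H.
exists ((\sum_j (l j)^-1 *: (u j *m adj (u j))) *m A).
have on' := on; case: on' => _ c.
rewrite mulmxA mulmx_sumr mulmx_suml -{1}(mul1mx A) -c mulmx_suml.
apply: eq_bigr => j _.
rewrite -scalemxAr mulmxA (Be) dec_eig // -!scalemxAl scalerA.
have [lj0|lj0] := eqVneq (l j) 0.
  have : B *m u j = 0 by rewrite Be dec_eig // lj0 scale0r.
  by move/H; rewrite -mulmxA => ->; rewrite !mulmx0 scaler0.
by rewrite mulVf // scale1r.
Qed.


Lemma psd0 : psd (0 : 'M[C]_d).
Proof. by split; [rewrite adj0 | move=> v; rewrite mulmx0 mul0mx mxE]. Qed.

Lemma psd_add A B : psd A -> psd B -> psd (A + B).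
Proof.
move=> [Ah Ap] [Bh Bp]; split; first by rewrite adjD -Ah -Bh.
by move=> v; rewrite mulmxDr mulmxDl mxE addr_ge0.
Qed.

Lemma psd_sum I (r : seq I) (P : pred I) (F : I -> 'M[C]_d) :
  (forall i, P i -> psd (F i)) -> psd (\sum_(i <- r | P i) F i).
Proof. by move=> H; apply: big_ind => //; [exact: psd0 | exact: psd_add]. Qed.

Lemma psd_scale c A : 0 <= c -> psd A -> psd (c *: A).
Proof.
move=> c0 [Ah Ap]; split; first by rewrite adjZ geC0_conj // -Ah.
by move=> v; rewrite -scalemxAr -scalemxAl mxE mulr_ge0.
Qed.

Lemma psd_outer w : psd (w *m adj w).
Proof.
split; first by rewrite adj_mul adjK.
move=> v.
have -> : adj v *m (w *m adj w) *m v = (adj v *m w) *m (adj w *m v) by rewrite !mulmxA.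
by rewrite mxE big_ord1 (dotC v w) mulrC mul_conjC_ge0.
Qed.

Lemma psd_conj (M : 'M[C]_d) A : psd A -> psd (M *m A *m adj M).
Proof.
move=> [Ah Ap]; split; first by rewrite !adj_mul adjK -Ah mulmxA.
move=> v; have := Ap (adj M *m v).
by rewrite adj_mul adjK !mulmxA.
Qed.

Lemma psd_herm A x : psd A -> adj x *m A = adj (A *m x).
Proof. by move=> [Ah _]; rewrite adj_mul -Ah. Qed.

Lemma psd_range_add A B : psd A -> psd B -> exists D, A = (A + B) *m D.
Proof.
move=> pA pB; apply: range_of_ker; first exact: psd_add.
move=> x ABx; rewrite (psd_herm _ pA).
have : (adj x *m (A + B) *m x) 0 0 = 0 by rewrite -mulmxA ABx mulmx0 mxE.
rewrite mulmxDr mulmxDl mxE => /eqP; rewrite paddr_eq0; last 2 first.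
- by case: pA => _; apply.
- by case: pB => _; apply.
by case/andP => /eqP /(psd_ker pA) -> _; rewrite adj0.
Qed.

Lemma span0 (P : 'cV[C]_d -> Prop) : span P 0.
Proof. by exists 0%N, (fun _ => 0), (fun _ => 0); split; [case | rewrite big_ord0]. Qed.

Lemma spanP (P : 'cV[C]_d -> Prop) w : P w -> span P w.
Proof. by move=> Pw; exists 1%N, (fun _ => w), (fun _ => 1); split => //; rewrite big_ord1 scale1r. Qed.

Lemma spanZ (P : 'cV[C]_d -> Prop) a w : span P w -> span P (a *: w).
Proof.
move=> [n [f [c [Pf ->]]]]; exists n, f, (fun i => a * c i); split => //.
by rewrite scaler_sumr; apply: eq_bigr => i _; rewrite scalerA.
Qed.

Lemma spanD (P : 'cV[C]_d -> Prop) w1 w2 : span P w1 -> span P w2 -> span P (w1 + w2).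
Proof.
move=> [n1 [f1 [c1 [Pf1 ->]]]] [n2 [f2 [c2 [Pf2 ->]]]].
exists (n1 + n2)%N, (fun i => match split i with inl a => f1 a | inr b => f2 b end),
  (fun i => match split i with inl a => c1 a | inr b => c2 b end); split.
  by move=> i; case: (split i).
rewrite big_split_ord; congr (_ + _); apply: eq_bigr => i _.
  by rewrite (unsplitK (inl i : 'I_n1 + 'I_n2)).
by rewrite (unsplitK (inr i : 'I_n1 + 'I_n2)).
Qed.

Lemma span_sum (P : 'cV[C]_d -> Prop) I (r : seq I) (Q : pred I) (F : I -> 'cV[C]_d) :
  (forall i, Q i -> span P (F i)) -> span P (\sum_(i <- r | Q i) F i).
Proof. by move=> H; apply: big_ind => //; [exact: span0 | exact: spanD]. Qed.

Lemma span_mono (P Q : 'cV[C]_d -> Prop) w : (forall x, P x -> Q x) -> span P w -> span Q w.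
Proof. by move=> PQ [n [f [c [Pf ->]]]]; exists n, f, c; split => // i; apply: PQ. Qed.

Lemma span_idem (P : 'cV[C]_d -> Prop) w : span (span P) w -> span P w.
Proof.
move=> [n [f [c [Pf ->]]]]; apply: span_sum => i _; exact: spanZ.
Qed.

Lemma supp_range A v : supp A v -> exists x, v = A *m x.
Proof.
have H : forall w, (exists x, w = A *m x) -> forall a, exists x, a *: w = A *m x.
  by move=> w [x ->] a; exists (a *: x); rewrite scalemxAr.
case=> n [f [c [Pf ->]]]; elim/big_rec: _ => [|i y _ [x ->]].
  by exists 0; rewrite mulmx0.
have [a [a0 Afi]] := Pf i.
have [z ->] : exists z, f i = A *m z by exists (a^-1 *: f i); rewrite -scalemxAr Afi scalerA mulVf // scale1r.
by exists (c i *: z + x); rewrite mulmxDr scalemxAr.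
Qed.

Lemma range_supp A x : psd A -> supp A (A *m x).
Proof.
move=> /psd_dec [u [l [l0 on Ae]]]; rewrite Ae dec_apply.
apply: span_sum => j _.
have [lj0|lj0] := eqVneq (l j) 0.
  by rewrite lj0 mul0r scale0r; apply: span0.
apply: spanZ; apply: spanP; exists (l j); split => //.
exact: dec_eig.
Qed.

End R.

Lemma sumsq (C : numClosedFieldType) n (a : 'I_n -> C) :
  (\sum_j a j) * (\sum_j a j)^* <= n%:R * \sum_j a j * (a j)^*.
Proof.
set T := \sum_j a j; set S := \sum_j a j * (a j)^*.
have H : 0 <= \sum_j \sum_k (a j - a k) * (a j - a k)^*.
  by do 2! (apply: sumr_ge0 => ? _); apply: mul_conjC_ge0.
have E : \sum_j \sum_k (a j - a k) * (a j - a k)^* =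
   (S *+ n + S *+ n) - T * T^* - T * T^*.
  have e : forall j k, (a j - a k) * (a j - a k)^* =
     (a j * (a j)^* + a k * (a k)^*) - a j * (a k)^* - a k * (a j)^*.
    by move=> j k; rewrite rmorphB /=; ring.
  under eq_bigr do under eq_bigr do rewrite e.
  under eq_bigr do rewrite !sumrB big_split /=.
  rewrite !sumrB big_split /=.
  rewrite sumr_const card_ord.
  rewrite (eq_bigr (fun i => a i * (a i)^* *+ n)); last first.
    by move=> i _; rewrite sumr_const card_ord.
  rewrite sumrMnl -/S.
  have TT : T * T^* = \sum_j \sum_k a j * (a k)^*.
    rewrite rmorph_sum /= mulr_suml; apply: eq_bigr => j _; by rewrite mulr_sumr.
  congr (_ - _ - _) => //.
  rewrite TT exchange_big /=; apply: eq_bigr => j _; apply: eq_bigr => k _.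
  by rewrite mulrC.
rewrite E in H.
have : 0 <= (S *+ n - T * T^*) *+ 2 by rewrite mulr2n; move: H; congr (0 <= _); ring.
rewrite pmulrn_lge0 // subr_ge0 => H2; by rewrite mulr_natl.
Qed.

Lemma dom_scalar (C : numClosedFieldType) n (l zz t : 'I_n -> C) : (forall j, 0 <= l j) ->
  (\sum_j l j * zz j * (t j)^*) * (\sum_j l j * zz j * (t j)^*)^* <=
  n%:R * (\sum_j l j * (zz j * (zz j)^*)) * \sum_j l j * (t j * (t j)^*).
Proof.
move=> l0; apply: le_trans (sumsq _) _.
rewrite -mulrA; apply: ler_wpM2l => //.
rewrite mulr_sumr; apply: ler_sum => j _.
have -> : l j * zz j * (t j)^* * (l j * zz j * (t j)^*)^* =
   (l j * (zz j * (zz j)^*)) * (l j * (t j * (t j)^*)).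
  by rewrite !rmorphM /= conjCK (geC0_conj (l0 j)); ring.
apply: ler_wpM2r; first by rewrite mulr_ge0 ?mul_conjC_ge0.
rewrite (bigD1 j) //= lerDl; apply: sumr_ge0 => i _.
by rewrite mulr_ge0 ?mul_conjC_ge0.
Qed.

Local Notation dot u x := ((adj u *m x) 0 0).

Lemma psd_quad_ge0 (C : numClosedFieldType) d (A : 'M[C]_d) (v : 'cV[C]_d) : psd A -> 0 <= (adj v *m A *m v) 0 0.
Proof. by case=> _; apply. Qed.

Lemma dom1 (C : numClosedFieldType) d (Y : 'M[C]_d) (z : 'cV[C]_d) : psd Y ->
  psd ((d%:R * (adj z *m Y *m z) 0 0) *: Y - (Y *m z) *m adj (Y *m z)).
Proof.
move=> pY; have q0 := psd_quad_ge0 z pY.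
have c0 : 0 <= d%:R * (adj z *m Y *m z) 0 0 by rewrite mulr_ge0.
have [Yh _] := pY.
split; first by rewrite adjB adjZ geC0_conj // -Yh (adj_mul (Y *m z)) adjK.
move=> v; have mxB : forall (M N : 'M[C]_1), (M - N) 0 0 = M 0 0 - N 0 0 by move=> M N; rewrite !mxE.
have mxZ : forall a (M : 'M[C]_1), (a *: M) 0 0 = a * M 0 0 by move=> a M; rewrite !mxE.
rewrite mulmxBr mulmxBl mxB subr_ge0 -scalemxAr -scalemxAl mxZ.
have -> : adj v *m (Y *m z *m adj (Y *m z)) *m v = (adj v *m (Y *m z)) *m (adj (Y *m z) *m v)
  by rewrite !mulmxA.
rewrite mxE big_ord1 (dotC (Y *m z) v).
have [u [l [l0 on Ye]]] := psd_dec pY.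
rewrite Ye !dec_quad dec_apply.
have -> : dot v (\sum_j (l j * dot (u j) z) *: u j) =
    \sum_j (l j * dot (u j) z) * (dot (u j) v)^*.
  rewrite mulmx_sumr summxE; apply: eq_bigr => j _.
  by rewrite -scalemxAr mxE (dotC v (u j)).
exact: (@dom_scalar _ _ l (fun j => dot (u j) z) (fun j => dot (u j) v)).
Qed.

Lemma dom (C : numClosedFieldType) d (X Y D : 'M[C]_d) : psd X -> psd Y -> X = Y *m D ->
  exists c, 0 <= c /\ psd (c *: Y - X).
Proof.
move=> pX pY XYD; have [u [k [k0 on Xe]]] := psd_dec pX.
pose z i := D *m u i.
have Yz : forall i, Y *m z i = k i *: u i by move=> i; rewrite /z mulmxA -XYD Xe dec_eig.
have Xe2 : X = \sum_i (k i)^-1 *: ((Y *m z i) *m adj (Y *m z i)).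
  rewrite {1}Xe; apply: eq_bigr => i _.
  rewrite Yz adjZ (geC0_conj (k0 i)) -scalemxAl -scalemxAr !scalerA.
  have [->|ki0] := eqVneq (k i) 0; first by rewrite invr0 !mul0r.
  by rewrite mulVf // mul1r.
exists (\sum_i (k i)^-1 * (d%:R * (adj (z i) *m Y *m z i) 0 0)); split.
  apply: sumr_ge0 => i _; rewrite mulr_ge0 ?invr_ge0 ?mulr_ge0 //.
  exact: psd_quad_ge0.
rewrite Xe2 scaler_suml -sumrB; apply: psd_sum => i _.
rewrite -scalerA -scalerBr; apply: psd_scale; first by rewrite invr_ge0.
exact: dom1.
Qed.

Lemma mono (C : numClosedFieldType) d (T : 'M[C]_d -> 'M[C]_d) :
  (forall A B, T (A + B) = T A + T B) -> (forall c A, T (c *: A) = c *: T A) ->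
  (forall A, psd A -> psd (T A)) ->
  forall X Y D, psd X -> psd Y -> X = Y *m D -> exists D', T X = T Y *m D'.
Proof.
move=> TD TZ Tp X Y D pX pY XYD.
have [c [c0 pc]] := dom pX pY XYD.
have [D0 e] := psd_range_add (Tp _ pX) (Tp _ pc).
exists (c *: D0); rewrite e -TD addrC subrK TZ.
by rewrite -scalemxAl scalemxAr.
Qed.

Lemma rsub_trans (C : numClosedFieldType) d (A B Z : 'M[C]_d) :
  (exists D, A = B *m D) -> (exists D, B = Z *m D) -> exists D, A = Z *m D.
Proof. by move=> [D1 ->] [D2 ->]; exists (D2 *m D1); rewrite mulmxA. Qed.

Lemma rsub_add (C : numClosedFieldType) d (A B Z : 'M[C]_d) :
  (exists D, A = Z *m D) -> (exists D, B = Z *m D) -> exists D, A + B = Z *m D.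
Proof. by move=> [D1 ->] [D2 ->]; exists (D1 + D2); rewrite mulmxDr. Qed.

Lemma rsub_rank (C : numClosedFieldType) d (A B : 'M[C]_d) :
  (exists D, A = B *m D) -> (\rank A <= \rank B)%N.
Proof. by move=> [D ->]; apply: mxrankM_maxl. Qed.

Lemma rsub_rank_eq (C : numClosedFieldType) d (A B : 'M[C]_d) :
  (exists D, A = B *m D) -> \rank A = \rank B -> exists D, B = A *m D.
Proof.
move=> [D e] r.
have sAB : (A^T <= B^T)%MS by rewrite e trmx_mul submxMl.
have := mxrank_leqif_sup sAB; rewrite !mxrank_tr r => [[_]].
rewrite eqxx => /esym /submxP [D' e'].
by exists D'^T; rewrite -[B]trmxK e' trmx_mul trmxK.
Qed.

Section P.
Variable C : numClosedFieldType.
Variable d m : nat.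
Variable E : 'I_m -> {linear 'M[C]_d -> 'M[C]_d}.
Variable M1 : 'M[C]_d.
Hypothesis Epos : forall k A, psd A -> psd (E k A).

Local Notation G := (Fsum E M1).

Lemma cp_psd (T : 'M[C]_d -> 'M[C]_d) : completely_positive T -> forall A, psd A -> psd (T A).
Proof.
move=> cp A [Ah Ap].
have pb : psd_block (fun _ _ : 'I_1 => A).
  by split => [//|v]; rewrite !big_ord1; apply: Ap.
have [h p] := cp 1%N _ pb.
split; first exact: h ord0 ord0.
by move=> v; have := p (fun _ => v); rewrite !big_ord1.
Qed.

Lemma FkD k A B : Fk E M1 k (A + B) = Fk E M1 k A + Fk E M1 k B.
Proof. by rewrite /Fk mulmxDr mulmxDl raddfD. Qed.
Lemma FkZ k c A : Fk E M1 k (c *: A) = c *: Fk E M1 k A.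
Proof. by rewrite /Fk -scalemxAr -scalemxAl linearZ. Qed.
Lemma Fk0 k : Fk E M1 k 0 = 0.
Proof. by rewrite /Fk mulmx0 mul0mx raddf0. Qed.
Lemma Fk_psd k A : psd A -> psd (Fk E M1 k A).
Proof. by move=> pA; apply: Epos; apply: psd_conj. Qed.

Lemma GD A B : G (A + B) = G A + G B.
Proof. by rewrite /Fsum -big_split; apply: eq_bigr => k _; rewrite FkD. Qed.
Lemma GZ c A : G (c *: A) = c *: G A.
Proof. by rewrite /Fsum scaler_sumr; apply: eq_bigr => k _; rewrite FkZ. Qed.
Lemma G0 : G 0 = 0.
Proof. by rewrite /Fsum big1 // => k _; apply: Fk0. Qed.
Lemma G_psd A : psd A -> psd (G A).
Proof. by move=> pA; apply: psd_sum => k _; apply: Fk_psd. Qed.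
Lemma G_sum I (r : seq I) (P : pred I) F : G (\sum_(i <- r | P i) F i) = \sum_(i <- r | P i) G (F i).
Proof. by elim/big_rec2: _ => [|i x y _ <-]; rewrite ?G0 ?GD. Qed.
Lemma iter_psd n A : psd A -> psd (iter n G A).
Proof. by move=> pA; elim: n => //= n IH; apply: G_psd. Qed.

Lemma FstrD f A B : Fstr E M1 f (A + B) = Fstr E M1 f A + Fstr E M1 f B.
Proof. by elim: f A B => //= k f IH A B; rewrite /Fstr /= FkD -IH. Qed.
Lemma Fstr0 f : Fstr E M1 f 0 = 0.
Proof. by elim: f => //= k f IH; rewrite /Fstr /= Fk0. Qed.
Lemma Fstr_sum f I (r : seq I) (P : pred I) F :
  Fstr E M1 f (\sum_(i <- r | P i) F i) = \sum_(i <- r | P i) Fstr E M1 f (F i).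
Proof. by elim/big_rec2: _ => [|i x y _ <-]; rewrite ?Fstr0 ?FstrD. Qed.
Lemma Fstr_psd f A : psd A -> psd (Fstr E M1 f A).
Proof. by elim: f A => //= k f IH A pA; apply: IH; apply: Fk_psd. Qed.

Lemma iter_mono n X Y D : psd X -> psd Y -> X = Y *m D ->
  exists D', iter n G X = iter n G Y *m D'.
Proof.
elim: n => [|n IH] pX pY e; first by exists D.
have [D1 e1] := IH pX pY e.
exact: (mono GD GZ G_psd (iter_psd n pX) (iter_psd n pY) e1).
Qed.

Lemma Fstr_iter f A : psd A -> exists D, Fstr E M1 f A = iter (size f) G A *m D.
Proof.
elim: f A => [|k f IH] A pA; first by exists 1%:M; rewrite mulmx1.
have [D1 e1] := IH _ (Fk_psd k pA).
apply: (rsub_trans (ex_intro _ D1 e1)); rewrite [size _]/= iterSr.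
have pk := Fk_psd k pA.
have [D2 e2] : exists D, Fk E M1 k A = G A *m D.
  rewrite /Fsum (bigD1 k) //=; apply: psd_range_add => //.
  by apply: psd_sum => j _; apply: Fk_psd.
exact: (iter_mono (size f) pk (G_psd pA) e2).
Qed.

Lemma iter_reach n rho x : psd rho ->
  span (fun w => exists f, supp (Fstr E M1 f rho) w) (iter n G rho *m x).
Proof.
elim: n rho x => [|n IH] rho x prho.
  by apply: spanP; exists [::]; apply: range_supp.
rewrite iterSr; apply: span_idem; apply: span_mono (IH _ x (G_psd prho)).
move=> w [f /supp_range [y ->]].
rewrite /Fsum Fstr_sum mulmx_suml; apply: span_sum => k _.
apply: spanP; exists (k :: f); apply: range_supp.
by apply: Fstr_psd.
Qed.


Variable rho0 : 'M[C]_d.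
Hypothesis prho0 : psd rho0.
Hypothesis rho0_neq0 : rho0 != 0.

Definition S k := \sum_(i < k.+1) iter i G rho0.

Lemma S_psd k : psd (S k).
Proof. by apply: psd_sum => i _; apply: iter_psd. Qed.

Lemma S_step k : S k.+1 = rho0 + G (S k).
Proof.
by rewrite /S big_ord_recl G_sum.
Qed.

Lemma S_rec k : S k.+1 = S k + iter k.+1 G rho0.
Proof. by rewrite /S big_ord_recr. Qed.

Lemma S_inc k : exists D, S k = S k.+1 *m D.
Proof. by rewrite S_rec; apply: psd_range_add; [apply: S_psd | apply: iter_psd]. Qed.

Lemma iter_S n : exists D, iter n G rho0 = S n *m D.
Proof.
case: n => [|n]; first by exists 1%:M; rewrite /S big_ord1 mulmx1.
by rewrite S_rec addrC; apply: psd_range_add; [apply: iter_psd | apply: S_psd].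
Qed.

Lemma S_le j k : (j <= k)%N -> exists D, S j = S k *m D.
Proof.
elim: k => [|k IH]; first by rewrite leqn0 => /eqP ->; exists 1%:M; rewrite mulmx1.
rewrite leq_eqVlt => /orP[/eqP -> | ]; first by exists 1%:M; rewrite mulmx1.
by rewrite ltnS => /IH H; apply: rsub_trans H (S_inc k).
Qed.

Lemma stable_exists : exists k, (k < d)%N /\ exists D, S k.+1 = S k *m D.
Proof.
case: (boolP [exists k : 'I_d, \rank (S k.+1) == \rank (S k)]).
  move=> /existsP [k /eqP r]; exists k; split => //.
  by apply: rsub_rank_eq => //; apply: S_inc.
rewrite negb_exists => /forallP H.
have key : forall k, (k <= d)%N -> (k < \rank (S k))%N.
  elim => [_|k IH kd].
    by rewrite /S big_ord1 lt0n mxrank_eq0.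
  have := H (Ordinal kd); rewrite /= => rne.
  have := rsub_rank (S_inc k); rewrite leq_eqVlt eq_sym (negbTE rne) /= => lt.
  by apply: leq_ltn_trans lt; apply: IH; apply: ltnW.
have := key d (leqnn d); rewrite ltnNge rank_leq_row //.
Qed.

Lemma stab : (0 < d)%N -> forall n, exists D, iter n G rho0 = S d.-1 *m D.
Proof.
move=> d0 n.
have [k [kd [D0 e0]]] := stable_exists.
have kd' : (k <= d.-1)%N by rewrite -ltnS prednK.
have Sk : forall i, exists D, S (k + i) = S k *m D.
  elim => [|i IH]; first by rewrite addn0; exists 1%:M; rewrite mulmx1.
  rewrite addnS S_step; apply: rsub_add.
    by apply: rsub_trans (iter_S 0) _; apply: S_le.
  have [D1 e1] := IH.
  have [D2 e2] := mono GD GZ G_psd (S_psd _) (S_psd _) e1.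
  apply: rsub_trans (ex_intro _ D2 e2) _.
  apply: rsub_trans (ex_intro _ D0 e0).
  by rewrite S_step addrC; apply: psd_range_add; [apply: G_psd; apply: S_psd | ].
have [nd|dn] := leqP n d.-1.
  by apply: rsub_trans (iter_S n) (S_le nd).
apply: rsub_trans (iter_S n) _.
have -> : n = (k + (n - k))%N by rewrite subnKC // (leq_trans kd') // ltnW.
by apply: rsub_trans (Sk _) (S_le kd').
Qed.

End P.

Unset Implicit Arguments.

Theorem mainTheorem1 (C : numClosedFieldType) (d : nat) (m : nat)
  (E : 'I_m -> {linear 'M[C]_d -> 'M[C]_d}) (M0 M1 rho0 : 'M[C]_d) :
  (0 < d)%N -> (0 < m)%N ->
  (forall k, super_operator (E k) /\ trace_preserving (E k)) ->
  adj M0 *m M0 + adj M1 *m M1 = 1%:M ->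
  density_operator rho0 ->
  forall v : 'cV[C]_d,
    reachable E M1 rho0 v <->
    supp (\sum_(i < d) iter i (Fsum E M1) rho0) v.
Proof.
move=> d0 m0 HE HM [prho0 tr] v.
have Epos : forall k A, psd A -> psd (E k A).
  by move=> k; apply: cp_psd; case: (HE k) => [[cp _] _].
have rne : rho0 != 0.
  apply/eqP => r0; move: tr; rewrite r0 mxtrace0 => /eqP; by rewrite eq_sym oner_eq0.
have -> : \sum_(i < d) iter i (Fsum E M1) rho0 = S E M1 rho0 d.-1 by rewrite /S prednK.
split.
- move=> reach; apply: span_idem; apply: span_mono reach.
  move=> w [f /supp_range [y ->]].
  have [D1 e1] := Fstr_iter M1 Epos f prho0.
  have [D2 e2] := stab M1 Epos prho0 rne d0 (size f).
  rewrite e1 e2 -!mulmxA; exact: range_supp (S_psd M1 Epos prho0 _).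
- move=> /supp_range [x ->]; rewrite /S mulmx_suml; apply: span_sum => i _.
  exact: iter_reach M1 Epos i rho0 x prho0.
Qed.
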